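(* Let $G$ be a simple graph with $V(G)=V_1\cup V_2$, $V_1\cap V_2=\{v_0\}$, and $E(G)=E(G[V_1])\cup E(G[V_2])$. If $f_i\in\mathrm{SEDF}^0(G[V_i])$ for $i=1,2$, then the function $f=f_1*f_2:E(G)\to\{1,-1\}$, defined by $f(e)=f_i(e)$ for $e\in E(G[V_i])$, belongs to $\mathrm{SEDF}^0(G)$ and $f(G)=f_1(G[V_1])+f_2(G[V_2])$.
   Context: $G[S]$ denotes the subgraph induced by $S$. For a graph $H$ and $f:E(H)\to\{1,-1\}$, $f(H)=\sum_{e\in E(H)}f(e)$ and $f(v)=\sum_{e\in E_H(v)}f(e)$, where $E_H(v)$ is the set of edges of $H$ incident with $v$. $\mathrm{SEDF}^0(H)$ is the set of functions $f:E(H)\to\{1,-1\}$ such that (a) $f(v)\ge 0$ for all $v\in V(H)$, and (b) $f(u)+f(v)\ge 2$ for every edge $uv$ with $f(uv)=1$. *)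

(* Defs.v *)
(* A simple graph on a finite vertex type T is given by a
   symmetric irreflexive relation adj : rel T.  Edges are represented as
   2-element vertex sets [set x; y]. *)
From mathcomp Require Import all_boot all_order all_algebra.
Set Implicit Arguments. Unset Strict Implicit. Unset Printing Implicit Defensive.
Import Order.TTheory GRing.Theory Num.Theory.
Local Open Scope ring_scope.

Section Defs.
Variable T : finType.
Variable adj : rel T.

Definition iedges (S : {set T}) : {set {set T}} :=
  [set [set x; y] | x in S, y in S & adj x y].

Definition fsum (S : {set T}) (f : {set T} -> int) : int :=
  \sum_(ed in iedges S) f ed.

Definition fvert (S : {set T}) (f : {set T} -> int) (v : T) : int :=
  \sum_(ed in iedges S | v \in ed) f ed.

(* f in SEDF^0(G[S]) (values of f off E(G[S]) are irrelevant) *)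
Definition SEDF0 (S : {set T}) (f : {set T} -> int) : Prop :=
  [/\ (forall ed, ed \in iedges S -> f ed = 1 \/ f ed = -1),
      (forall v, v \in S -> 0 <= fvert S f v) &
      (forall x y, x \in S -> y \in S -> adj x y -> f [set x; y] = 1 ->
          2 <= fvert S f x + fvert S f y)].

Definition fglue (V1 : {set T}) (f1 f2 : {set T} -> int) : {set T} -> int :=
  fun ed => if ed \in iedges V1 then f1 ed else f2 ed.
End Defs.

(* Main.v *)
Require Import Defs.
From mathcomp Require Import all_boot all_order all_algebra.
Import Order.TTheory GRing.Theory Num.Theory.
Local Open Scope ring_scope.

Lemma iedges_sub (T : finType) (adj : rel T) (S : {set T}) ed :
  ed \in iedges adj S -> ed \subset S.
Proof.
case/imset2P=> x y xS; rewrite inE => /andP[yS _] ->.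
by apply/subsetP=> z; rewrite !inE => /orP[] /eqP->.
Qed.

Lemma fvert_out (T : finType) (adj : rel T) (S : {set T}) (f : {set T} -> int) (v : T) :
  v \notin S -> fvert adj S f v = 0.
Proof.
move=> vS; rewrite /fvert big1 // => ed /andP[/iedges_sub /subsetP H vi].
by move: vS; rewrite H.
Qed.

Lemma fvert_ge0 (T : finType) (adj : rel T) (S : {set T}) (f : {set T} -> int) (v : T) :
  SEDF0 adj S f -> 0 <= fvert adj S f v.
Proof.
case=> _ H _; case vS: (v \in S); first exact: H.
by rewrite fvert_out ?vS.
Qed.

Theorem lemma2p2 (T : finType) (adj : rel T)
  (adj_sym : symmetric adj) (adj_irr : irreflexive adj)
  (V1 V2 : {set T}) (v0 : T)
  (hV : V1 :|: V2 = [set: T]) (hI : V1 :&: V2 = [set v0])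
  (hE : iedges adj [set: T] = iedges adj V1 :|: iedges adj V2)
  (f1 f2 : {set T} -> int)
  (hf1 : SEDF0 adj V1 f1) (hf2 : SEDF0 adj V2 f2) :
  SEDF0 adj [set: T] (fglue adj V1 f1 f2) /\
  fsum adj [set: T] (fglue adj V1 f1 f2) = fsum adj V1 f1 + fsum adj V2 f2.
Proof.
have disj : [disjoint iedges adj V1 & iedges adj V2].
  apply/pred0P=> ed /=; apply/negbTE/negP=> /andP[e1 e2].
  move: (e1); case/imset2P=> x y _; rewrite inE => /andP[_ axy] ed_eq.
  move/iedges_sub/subsetP: e1 => s1; move/iedges_sub/subsetP: e2 => s2.
  have hx : x \in V1 :&: V2 by rewrite inE s1 ?s2 // ed_eq !inE eqxx.
  have hy : y \in V1 :&: V2 by rewrite inE s1 ?s2 // ed_eq !inE eqxx ?orbT.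
  move: hx hy axy; rewrite hI !inE => /eqP-> /eqP->.
  by rewrite adj_irr.
have U (F : {set T} -> int) : \sum_(i in iedges adj V1 :|: iedges adj V2) F i =
    \sum_(i in iedges adj V1) F i + \sum_(i in iedges adj V2) F i.
  by rewrite -bigU //; apply: eq_bigl => i; rewrite inE.
have g1 ed : ed \in iedges adj V1 -> fglue adj V1 f1 f2 ed = f1 ed.
  by move=> h; rewrite /fglue h.
have g2 ed : ed \in iedges adj V2 -> fglue adj V1 f1 f2 ed = f2 ed.
  move=> h; rewrite /fglue; case: ifP => // h1.
  by move: (disjointFr disj h1); rewrite h.
have fv v : fvert adj [set: T] (fglue adj V1 f1 f2) v =
            fvert adj V1 f1 v + fvert adj V2 f2 v.
  rewrite /fvert hE big_mkcondr U -!big_mkcondr.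
  congr (_ + _); apply: eq_bigr => ed /andP[h _]; [exact: g1 | exact: g2].
split; last first.
  rewrite /fsum hE U; congr (_ + _); apply: eq_bigr => ed h;
    [exact: g1 | exact: g2].
case: (hf1) => a1 b1 c1; case: (hf2) => a2 b2 c2.
split.
- move=> ed; rewrite hE inE => /orP[h|h]; [rewrite g1 //; exact: a1|rewrite g2 //; exact: a2].
- by move=> v _; rewrite fv addr_ge0 // fvert_ge0.
- move=> x y _ _ axy.
  have : [set x; y] \in iedges adj [set: T] by apply/imset2P; exists x y; rewrite ?inE.
  have hx1 S : [set x; y] \in iedges adj S -> (x \in S) && (y \in S).
    by move/iedges_sub/subsetP=> s; rewrite !s // !inE eqxx ?orbT.
  rewrite hE inE => /orP[h|h].
  + rewrite g1 // => /eqP e; case/andP: (hx1 _ h) => xS yS.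
    have := c1 x y xS yS axy (eqP e).
    rewrite !fv => H.
    apply: (le_trans H); rewrite addrACA lerDl addr_ge0 // fvert_ge0 //.
  + rewrite g2 // => /eqP e; case/andP: (hx1 _ h) => xS yS.
    have := c2 x y xS yS axy (eqP e).
    rewrite !fv => H.
    apply: (le_trans H); rewrite addrACA lerDr addr_ge0 // fvert_ge0 //.
Qed.
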